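(* Let $d\ge2$, let $\mathbb{F}_q$ be a finite field of odd characteristic, and let $S_j=\{x\in\mathbb{F}_q^d : Q(x)=j\}$ with $j\in\mathbb{F}_q^*$ and $Q$ a non-degenerate quadratic form over $\mathbb{F}_q$. Suppose that for every $x\in\mathbb{F}_q^d\setminus\{(0,\dots,0)\}$, \[\#\{(\alpha,\beta)\in S_j\times S_j:\alpha+\beta=x\}\lesssim q^{d-2}.\] Then $R^*(2\rightarrow 4)\lesssim 1$.
   Context: $\chi$ is a fixed non-trivial additive character of $\mathbb{F}_q$. A quadratic form $Q(x)=\sum_{i,k=1}^d a_{ik}x_ix_k$ with $a_{ik}=a_{ki}\in\mathbb{F}_q$ is non-degenerate if the matrix $(a_{ik})$ is invertible. For $f:S_j\to\mathbb{C}$, $\widehat{fd\sigma}(m)=\frac{1}{\#S_j}\sum_{x\in S_j}\chi(-x\cdot m)f(x)$. Norms: $\|g\|_{L^r(\mathbb{F}_q^d,dm)}=\big(\sum_{m\in\mathbb{F}_q^d}|g(m)|^r\big)^{1/r}$ and $\|f\|_{L^p(S_j,d\sigma)}=\big(\frac{1}{\#S_j}\sum_{x\in S_j}|f(x)|^p\big)^{1/p}$. $R^*(p\rightarrow r)$ is the best constant such that $\|\widehat{fd\sigma}\|_{L^r(\mathbb{F}_q^d,dm)}\le R^*(p\rightarrow r)\|f\|_{L^p(S_j,d\sigma)}$ for all $f:S_j\to\mathbb{C}$. $X\lesssim Y$ means $X\le CY$ for a constant $C$ independent of $q$ (and of $x$). *)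

(* Defs.v *)
(* Values of characters / functions live in algC (the complex
   algebraic numbers, a numClosedFieldType containing all roots of unity). *)
From HB Require Import structures.
From mathcomp Require Import all_boot all_order all_algebra algC.
Set Implicit Arguments. Unset Strict Implicit. Unset Printing Implicit Defensive.
Import Order.TTheory GRing.Theory Num.Theory.
Local Open Scope ring_scope.

Section Defs.
Variables (F : finFieldType) (d : nat).

Definition dotp (x m : 'rV[F]_d) : F := \sum_(i < d) x 0 i * m 0 i.

Definition qform (A : 'M[F]_d) (x : 'rV[F]_d) : F :=
  \sum_(i < d) \sum_(k < d) A i k * x 0 i * x 0 k.

Definition nondeg_qform (A : 'M[F]_d) : Prop := A^T = A /\ A \in unitmx.

Definition Sj (A : 'M[F]_d) (j : F) : {set 'rV[F]_d} :=
  [set x | qform A x == j].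

Definition nontriv_add_char (chi : F -> algC) : Prop :=
  chi 0 = 1 /\ (forall a b, chi (a + b) = chi a * chi b) /\ exists a, chi a != 1.

Definition extop (chi : F -> algC) (S : {set 'rV[F]_d}) (f : 'rV[F]_d -> algC)
  (m : 'rV[F]_d) : algC :=
  (#|S|%:R)^-1 * \sum_(x in S) chi (- dotp x m) * f x.

Definition norm4 (g : 'rV[F]_d -> algC) : algC :=
  4.-root (\sum_(m : 'rV[F]_d) `|g m| ^+ 4).

Definition norm2S (S : {set 'rV[F]_d}) (f : 'rV[F]_d -> algC) : algC :=
  sqrtC ((#|S|%:R)^-1 * \sum_(x in S) `|f x| ^+ 2).

(* "R^*(2 -> 4) <= C": since R^*(2->4) is the best (least) constant in the
   extension inequality, R^*(2 -> 4) <= C holds iff C is an admissible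
   constant, i.e. the inequality below holds for all f : S -> C. *)
Definition Rstar_2_4_le (chi : F -> algC) (S : {set 'rV[F]_d}) (C : algC) : Prop :=
  forall f : 'rV[F]_d -> algC, norm4 (extop chi S f) <= C * norm2S S f.

Definition sum_count (S : {set 'rV[F]_d}) (x : 'rV[F]_d) : nat :=
  #|[set p : 'rV[F]_d * 'rV[F]_d | (p.1 \in S) && (p.2 \in S) && (p.1 + p.2 == x)]|.

End Defs.

(* Main.v *)
Require Import Defs.
From HB Require Import structures.
From mathcomp Require Import all_boot all_order all_algebra algC ring zify.
Import Order.TTheory GRing.Theory Num.Theory.
Local Open Scope ring_scope.

Set Implicit Arguments. Unset Strict Implicit. Unset Printing Implicit Defensive.

Lemma CS_sum (T : finType) (P : {pred T}) (a : T -> algC) :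
  `|\sum_(i in P) a i| ^+ 2 <= #|P|%:R * \sum_(i in P) `|a i| ^+ 2.
Proof.
have h1 : `|\sum_(i in P) a i| ^+ 2 <= (\sum_(i in P) `|a i|) ^+ 2.
  rewrite ler_pXn2r // ?nnegrE ?sumr_ge0 //; first exact: ler_norm_sum.
apply: (le_trans h1).
rewrite expr2 big_distrl /=.
under eq_bigr do rewrite big_distrr /=.
have h2 : forall i j, `|a i| * `|a j| *+ 2 <= `|a i| ^+ 2 + `|a j| ^+ 2.
  by move=> i j; case: (real_leif_mean_square_scaled (ger0_real (normr_ge0 (a i))) (ger0_real (normr_ge0 (a j)))).
have : (\sum_(i in P) \sum_(j in P) `|a i| * `|a j|) *+ 2 <=
       \sum_(i in P) \sum_(j in P) (`|a i| ^+ 2 + `|a j| ^+ 2).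
  rewrite -sumrMnl; apply: ler_sum => i _; rewrite -sumrMnl; apply: ler_sum => j _.
  exact: h2.
have -> : \sum_(i in P) \sum_(j in P) (`|a i| ^+ 2 + `|a j| ^+ 2) =
          (#|P|%:R * \sum_(i in P) `|a i| ^+ 2) *+ 2.
  under eq_bigr do rewrite big_split /= sumr_const.
  rewrite big_split /= sumr_const -sumrMnl.
  rewrite -mulr_natl mulr2n mulr_sumr -mulr_sumr mulrDl !mul1r mulr_natl //.
  by rewrite sumrMnl.
by rewrite ler_pMn2r.
Qed.

Set Implicit Arguments. Unset Strict Implicit. Unset Printing Implicit Defensive.

Section Char.
Variables (F : finFieldType) (chi : F -> algC).
Hypothesis hchi : nontriv_add_char chi.

Lemma chi0 : chi 0 = 1. Proof. by case: hchi. Qed.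
Lemma chiD a b : chi (a + b) = chi a * chi b. Proof. by case: hchi => _ []. Qed.
Lemma chiNK a : chi (- a) * chi a = 1.
Proof. by rewrite -chiD addNr chi0. Qed.
Lemma chi_neq0 a : chi a != 0.
Proof. by apply/eqP => h; move: (chiNK a); rewrite h mulr0 => /eqP; rewrite eq_sym oner_eq0. Qed.

Lemma chi_pow a : chi a ^+ #|F| = 1.
Proof.
have hP : \prod_(b : F) chi b != 0 by apply/prodf_neq0 => b _; exact: chi_neq0.
apply: (mulIf hP); rewrite mul1r.
rewrite {2}(reindex_inj (addrI a)) /=.
under [in RHS]eq_bigr do rewrite chiD.
by rewrite big_split /= prodr_const.
Qed.

Lemma chi_norm a : `|chi a| = 1.
Proof.
apply/eqP; rewrite -(pexpr_eq1 (n := #|F|)) ?normr_ge0 //; last first.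
  by apply/card_gt0P; exists 0.
by rewrite -normrX chi_pow normr1.
Qed.

Lemma chi_conj a : (chi a)^* = chi (- a).
Proof.
have h : chi a * (chi a)^* = 1 by rewrite -normCK chi_norm expr1n.
apply: (mulIf (chi_neq0 a)); rewrite chiNK mulrC //.
Qed.

Lemma sum_chi : \sum_(t : F) chi t = 0.
Proof.
case: hchi => _ [_ [a ha]].
have : \sum_(t : F) chi t = chi a * \sum_(t : F) chi t.
  rewrite {1}(reindex_inj (addrI a)) /= mulr_sumr.
  by apply: eq_bigr => t _; rewrite chiD.
move/eqP; rewrite -{1}(mul1r (\sum_t chi t)) -subr_eq0 -mulrBl mulf_eq0 subr_eq0.
by rewrite eq_sym (negbTE ha) => /eqP.
Qed.

Lemma orth1 a : \sum_(t : F) chi (t * a) = if a == 0 then #|F|%:R else 0.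
Proof.
case: eqP => [->|/eqP ha].
  by under eq_bigr do rewrite mulr0 chi0; rewrite sumr_const.
transitivity (\sum_(t : F) chi t); last exact: sum_chi.
by rewrite [RHS](reindex_inj (mulIf ha)).
Qed.
End Char.

Set Implicit Arguments. Unset Strict Implicit. Unset Printing Implicit Defensive.

Section Dot.
Variables (F : finFieldType) (d : nat).
Implicit Types (x y m v : 'rV[F]_d).

Lemma dotpC x y : dotp x y = dotp y x.
Proof. by apply: eq_bigr => i _; rewrite mulrC. Qed.
Lemma dotpDl x y m : dotp (x + y) m = dotp x m + dotp y m.
Proof. by rewrite /dotp -big_split; apply: eq_bigr => i _; rewrite mxE mulrDl. Qed.
Lemma dotpZl a x m : dotp (a *: x) m = a * dotp x m.
Proof. by rewrite /dotp mulr_sumr; apply: eq_bigr => i _; rewrite mxE mulrA. Qed.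
Lemma dotpNl x m : dotp (- x) m = - dotp x m.
Proof. by rewrite -scaleN1r dotpZl mulN1r. Qed.
Lemma dotp0l m : dotp 0 m = 0.
Proof. by rewrite /dotp big1 // => i _; rewrite mxE mul0r. Qed.
Lemma dotpDr x y m : dotp m (x + y) = dotp m x + dotp m y.
Proof. by rewrite !(dotpC m) dotpDl. Qed.
Lemma dotpZr a x m : dotp m (a *: x) = a * dotp m x.
Proof. by rewrite !(dotpC m) dotpZl. Qed.
Lemma dotp_delta v (i : 'I_d) : dotp v (delta_mx 0 i) = v 0 i.
Proof.
rewrite /dotp (bigD1 i) //= big1 => [|k hk]; first by rewrite !mxE !eqxx mulr1 addr0.
by rewrite !mxE (negbTE hk) andbF mulr0.
Qed.

Variables (chi : F -> algC).
Hypothesis hchi : nontriv_add_char chi.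

Lemma orth v : \sum_(y : 'rV[F]_d) chi (dotp v y) =
  if v == 0 then (#|F| ^ d)%:R else 0.
Proof.
case: eqP => [->|/eqP hv].
  under eq_bigr do rewrite dotp0l (chi0 hchi).
  by rewrite sumr_const card_mx mul1n.
have [i hi] : exists i, v 0 i != 0.
  case: (pickP (fun i => v 0 i != 0)) => [i hi | h]; first by exists i.
  by case/eqP: hv; apply/rowP => i; rewrite mxE; move: (h i) => /negbFE/eqP.
have [_ [_ [a ha]]] := hchi.
set e := (a / v 0 i) *: delta_mx (0 : 'I_1) i.
have he : dotp v e = a by rewrite dotpZr dotp_delta mulfVK.
have : \sum_(y : 'rV[F]_d) chi (dotp v y) = chi a * \sum_(y : 'rV[F]_d) chi (dotp v y).
  rewrite {1}(reindex_inj (addrI e)) /= mulr_sumr.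
  by apply: eq_bigr => y _; rewrite dotpDr he (chiD hchi).
move/eqP; rewrite -{1}(mul1r (\sum_y chi _)) -subr_eq0 -mulrBl mulf_eq0 subr_eq0.
by rewrite eq_sym (negbTE ha) => /eqP.
Qed.
End Dot.

Set Implicit Arguments. Unset Strict Implicit. Unset Printing Implicit Defensive.

Section Planch.
Variables (F : finFieldType) (d : nat) (chi : F -> algC).
Hypothesis hchi : nontriv_add_char chi.

Lemma planch (g : 'rV[F]_d -> algC) :
  \sum_(m : 'rV[F]_d) `|\sum_(z : 'rV[F]_d) chi (- dotp z m) * g z| ^+ 2 =
  (#|F| ^ d)%:R * \sum_(z : 'rV[F]_d) `|g z| ^+ 2.
Proof.
transitivity (\sum_(m : 'rV[F]_d) \sum_(z : 'rV[F]_d) \sum_(w : 'rV[F]_d)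
    g z * (g w)^* * chi (dotp (w - z) m)).
  apply: eq_bigr => m _; rewrite normCK rmorph_sum big_distrl /=.
  apply: eq_bigr => z _; rewrite big_distrr /=; apply: eq_bigr => w _.
  rewrite rmorphM /= (chi_conj hchi) opprK dotpDl dotpNl (chiD hchi).
  by ring.
rewrite exchange_big /= mulr_sumr; apply: eq_bigr => z _.
rewrite exchange_big /=.
under eq_bigr do rewrite -mulr_sumr (orth hchi) subr_eq0.
rewrite (bigD1 z) //= eqxx big1 => [|w /negbTE ->]; last by rewrite mulr0.
by rewrite addr0 normCK mulrC.
Qed.
End Planch.

Set Implicit Arguments. Unset Strict Implicit. Unset Printing Implicit Defensive.

Section Main.
Variables (F : finFieldType) (d : nat) (chi : F -> algC).
Hypothesis hchi : nontriv_add_char chi.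
Variables (S : {set 'rV[F]_d}) (f : 'rV[F]_d -> algC).

Definition Pz (z : 'rV[F]_d) : {set 'rV[F]_d * 'rV[F]_d} :=
  [set p : 'rV[F]_d * 'rV[F]_d | (p.1 \in S) && (p.2 \in S) && (p.1 + p.2 == z)].
Definition G z := \sum_(p in Pz z) f p.1 * f p.2.

Lemma extop_sq m : extop chi S f m ^+ 2 =
  (#|S|%:R ^-1) ^+ 2 * \sum_(z : 'rV[F]_d) chi (- dotp z m) * G z.
Proof.
rewrite /extop exprMn; congr (_ * _).
rewrite expr2 big_distrl /=.
under eq_bigr do rewrite big_distrr /=.
rewrite pair_big_dep /=.
rewrite (partition_big (fun p => p.1 + p.2) (fun _ => true)) //=.
apply: eq_bigr => z _; rewrite /G mulr_sumr.
apply: eq_big => [p|p /andP[_ /eqP hz]]; first by rewrite inE.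
rewrite -hz dotpDl opprD (chiD hchi); ring.
Qed.

Lemma sum4 : \sum_(m : 'rV[F]_d) `|extop chi S f m| ^+ 4 =
  (#|S|%:R ^-1) ^+ 4 * (#|F| ^ d)%:R * \sum_(z : 'rV[F]_d) `|G z| ^+ 2.
Proof.
transitivity (\sum_(m : 'rV[F]_d) (#|S|%:R ^-1) ^+ 4 *
     `|\sum_(z : 'rV[F]_d) chi (- dotp z m) * G z| ^+ 2).
  apply: eq_bigr => m _.
  rewrite (_ : 4 = 2 * 2)%N // exprM -normrX extop_sq normrM normrX.
  rewrite exprMn -exprM ger0_norm //. by rewrite invr_ge0 ler0n.
by rewrite -mulr_sumr (planch hchi) mulrA.
Qed.

Definition Sig2 := \sum_(x in S) `|f x| ^+ 2.

Lemma half1 z : \sum_(p in Pz z) `|f p.1| ^+ 2 <= Sig2.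
Proof.
rewrite (eq_bigl (fun p => (p.1 \in S) && ((p.2 \in S) && (p.1 + p.2 == z))));
  last by move=> p; rewrite inE andbA.
rewrite -(pair_big_dep (fun x => x \in S) (fun x y => (y \in S) && (x + y == z))
  (fun x y => `|f x| ^+ 2)) /=.
apply: ler_sum => x _.
apply: (@le_trans _ _ (\sum_(y | y == z - x) `|f x| ^+ 2)); last by rewrite big_pred1_eq.
rewrite big_mkcond [X in _ <= X]big_mkcond /=; apply: ler_sum => y _.
case: (y \in S) => /=; last by case: ifP => // _; rewrite exprn_ge0.
case: (boolP (x + y == z)) => [/eqP <-|_]; last by case: ifP => // _; rewrite exprn_ge0.
by rewrite (addrC x y) addrK eqxx.
Qed.

Lemma half2 z : \sum_(p in Pz z) `|f p.2| ^+ 2 <= Sig2.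
Proof.
have hinj : injective (fun p : 'rV[F]_d * 'rV[F]_d => (p.2, p.1)) by move=> [a b] [c e] [-> ->].
rewrite (reindex_inj hinj) /=.
apply: le_trans (half1 z); rewrite le_eqVlt; apply/orP; left; apply/eqP.
apply: eq_bigl => p; rewrite !inE /= addrC; case: (p.1 \in S); case: (p.2 \in S) => //.
Qed.

Lemma G0 : `|G 0| ^+ 2 <= Sig2 ^+ 2.
Proof.
rewrite ler_pXn2r // ?nnegrE ?sumr_ge0 //.
have h : `|G 0| *+ 2 <= Sig2 + Sig2.
  apply: (@le_trans _ _ ((\sum_(p in Pz 0) `|f p.1| * `|f p.2|) *+ 2)).
    rewrite ler_pMn2r //; apply: le_trans (ler_norm_sum _ _ _) _.
    by apply: ler_sum => p _; rewrite normrM.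
  rewrite -sumrMnl; apply: le_trans (lerD (half1 0) (half2 0)); rewrite -big_split /=.
  apply: ler_sum => p _.
  by case: (real_leif_mean_square_scaled (ger0_real (normr_ge0 (f p.1))) (ger0_real (normr_ge0 (f p.2)))).
  by rewrite -mulr2n ler_pMn2r in h.
by move=> i _; rewrite exprn_ge0.
Qed.

Lemma sumH : \sum_(z : 'rV[F]_d) \sum_(p in Pz z) `|f p.1| ^+ 2 * `|f p.2| ^+ 2 = Sig2 ^+ 2.
Proof.
apply/esym; rewrite expr2 /Sig2 big_distrl /=.
under eq_bigr do rewrite big_distrr /=.
rewrite pair_big_dep /=.
rewrite (partition_big (fun p => p.1 + p.2) (fun _ => true)) //=.
by apply: eq_bigr => z _; apply: eq_bigl => p; rewrite inE.
Qed.

Lemma sumG (K : algC) (hK : 0 <= K)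
  (hN : forall z, z != 0 -> (sum_count S z)%:R <= K) :
  \sum_(z : 'rV[F]_d) `|G z| ^+ 2 <= (1 + K) * Sig2 ^+ 2.
Proof.
have hH : forall z, 0 <= \sum_(p in Pz z) `|f p.1| ^+ 2 * `|f p.2| ^+ 2.
  by move=> z; apply: sumr_ge0 => p _; rewrite mulr_ge0 ?exprn_ge0.
rewrite (bigD1 0) //= mulrDl mul1r lerD ?G0 //.
apply: (@le_trans _ _ (\sum_(z | z != 0) K * \sum_(p in Pz z) `|f p.1| ^+ 2 * `|f p.2| ^+ 2)).
  apply: ler_sum => z hz.
  apply: le_trans (CS_sum (mem (Pz z)) (fun p => f p.1 * f p.2)) _.
  under eq_bigr do rewrite normrM exprMn.
  by apply: ler_wpM2r; [exact: hH | exact: hN].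
rewrite -sumH mulr_sumr [X in _ <= X](bigD1 0) //= lerDr.
by rewrite mulr_ge0.
Qed.
End Main.

Set Implicit Arguments. Unset Strict Implicit. Unset Printing Implicit Defensive.

Section Quad.
Variables (F : finFieldType) (d : nat) (A : 'M[F]_d).
Hypothesis hAT : A^T = A.

Definition bil (x y : 'rV[F]_d) : F := \sum_(i < d) \sum_(k < d) A i k * x 0 i * y 0 k.

Lemma sA i k : A k i = A i k.
Proof. by have := congr1 (fun M : 'M[F]_d => M i k) hAT; rewrite mxE. Qed.

Lemma bilC x y : bil x y = bil y x.
Proof.
rewrite /bil exchange_big /=; apply: eq_bigr => i _; apply: eq_bigr => k _.
by rewrite sA; ring.
Qed.

Lemma bil_dotp x y : bil x y = dotp y (x *m A).
Proof.
rewrite /bil /dotp exchange_big /=; apply: eq_bigr => k _.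
rewrite mxE mulr_sumr; apply: eq_bigr => i _; ring.
Qed.

Lemma bilZr t x y : bil x (t *: y) = t * bil x y.
Proof.
rewrite /bil mulr_sumr; apply: eq_bigr => i _; rewrite mulr_sumr; apply: eq_bigr => k _.
rewrite mxE; ring.
Qed.

Lemma qformZ t x : qform A (t *: x) = t ^+ 2 * qform A x.
Proof.
rewrite /qform mulr_sumr; apply: eq_bigr => i _; rewrite mulr_sumr; apply: eq_bigr => k _.
rewrite !mxE; ring.
Qed.

Lemma qform0 : qform A 0 = 0.
Proof. by rewrite -(scale0r 0) qformZ expr2 !mul0r. Qed.

Lemma qformD x y : qform A (x + y) = qform A x + qform A y + 2 * bil x y.
Proof.
have e : 2 * bil x y = bil x y + bil y x by rewrite bilC; ring.
rewrite e /qform /bil -!big_split /=; apply: eq_bigr => i _.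
rewrite -!big_split /=; apply: eq_bigr => k _; rewrite !mxE sA; ring.
Qed.
End Quad.

Set Implicit Arguments. Unset Strict Implicit. Unset Printing Implicit Defensive.

Section Gauss.
Variables (F : finFieldType) (d : nat) (A : 'M[F]_d) (chi : F -> algC).
Hypothesis hchi : nontriv_add_char chi.
Hypothesis hA : nondeg_qform A.
Hypothesis h2 : (2 : F) != 0.

Definition Gam (t : F) := \sum_(x : 'rV[F]_d) chi (t * qform A x).

Lemma hmA (h : 'rV[F]_d) : h != 0 -> h *m A != 0.
Proof.
move=> hh; apply/eqP => e; case/eqP: hh.
by rewrite -(mulmxK hA.2 h) e mul0mx.
Qed.

Lemma gauss t : t != 0 -> Gam t * (Gam t)^* = (#|F| ^ d)%:R.
Proof.
move=> ht.
have hc : (Gam t)^* = \sum_(y : 'rV[F]_d) chi (- (t * qform A y)).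
  by rewrite rmorph_sum /=; apply: eq_bigr => y _; rewrite (chi_conj hchi).
rewrite hc /Gam big_distrl /=.
under eq_bigr do rewrite big_distrr /=.
rewrite exchange_big /=.
transitivity (\sum_(y : 'rV[F]_d) \sum_(h : 'rV[F]_d)
   chi (t * qform A h) * chi (dotp ((2 * t) *: (h *m A)) y)).
  apply: eq_bigr => y _.
  rewrite (reindex_inj (addrI y)) /=; apply: eq_bigr => h _.
  rewrite mulrC -!(chiD hchi); congr (chi _).
  rewrite qformD ?hA.1 // (bilC hA.1) bil_dotp dotpZl dotpC; ring.
rewrite exchange_big /=.
under eq_bigr do rewrite -mulr_sumr (orth hchi).
rewrite (bigD1 0) //= mul0mx scaler0 eqxx big1 => [|h hh].
  by rewrite addr0 qform0 mulr0 (chi0 hchi) mul1r.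
by rewrite scaler_eq0 mulf_eq0 (negbTE h2) (negbTE ht) (negbTE (hmA hh)) mulr0.
Qed.

Lemma count_char (g : 'rV[F]_d -> F) :
  #|F|%:R * #|[set x | g x == 0]|%:R = \sum_(x : 'rV[F]_d) \sum_(t : F) chi (t * g x).
Proof.
under eq_bigr do rewrite (orth1 hchi).
rewrite -big_mkcond /= sumr_const mulr_natr cardsE //.
Qed.

Definition Nk (k : F) := #|[set x : 'rV[F]_d | qform A x == k]|.

Lemma count_eq k : #|F|%:R * (Nk k)%:R - (#|F| ^ d)%:R =
  \sum_(t | t != 0) chi (- (t * k)) * Gam t.
Proof.
have -> : Nk k = #|[set x : 'rV[F]_d | qform A x - k == 0]|.
  by apply: eq_card => x; rewrite !inE subr_eq0.
rewrite count_char exchange_big /= (bigD1 0) //=.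
have -> : \sum_(x : 'rV[F]_d) chi (0 * (qform A x - k)) = (#|F| ^ d)%:R.
  by under eq_bigr do rewrite mul0r (chi0 hchi); rewrite sumr_const card_mx mul1n.
rewrite addrC addrK.
apply: eq_bigr => t _; rewrite /Gam mulr_sumr; apply: eq_bigr => x _.
by rewrite -(chiD hchi) mulrBr addrC.
Qed.

Lemma count_bound k : `|#|F|%:R * (Nk k)%:R - (#|F| ^ d)%:R| ^+ 2 <=
   ((#|F|.-1 * #|F|.-1) * #|F| ^ d)%:R :> algC.
Proof.
rewrite count_eq.
apply: le_trans (CS_sum [pred t : F | t != 0] _) _.
rewrite cardC1 /=.
have -> : \sum_(t in [pred t : F | t != 0]) `|chi (- (t * k)) * Gam t| ^+ 2 =
          \sum_(t in [pred t : F | t != 0]) (#|F| ^ d)%:R.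
  apply: eq_bigr => t ht; rewrite normrM exprMn (chi_norm hchi) expr1n mul1r.
  by rewrite normCK gauss.
rewrite sumr_const /= cardC1 -[(_ ^ d)%:R *+ _]mulr_natr -!natrM ler_nat.
by rewrite (mulnC (#|F| ^ d)%N) mulnA.
Qed.
End Gauss.

Set Implicit Arguments. Unset Strict Implicit. Unset Printing Implicit Defensive.

Lemma card_ge3 (F : finFieldType) : (2:F) != 0 -> (3 <= #|F|)%N.
Proof.
move=> h2.
have h12 : (1 : F) != 2.
  have e : (1:F) - 2 = -1 by rewrite -addn1 natrD opprD addrA subrr add0r.
  by rewrite -subr_eq0 e oppr_eq0 oner_eq0.
have h0 : (0 : F) \notin [set 1; 2].
  by rewrite !inE negb_or eq_sym oner_eq0 eq_sym h2.
apply: leq_trans (max_card (mem [set (0:F); 1; 2])).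
by rewrite -setUA cardsU1 h0 cards2 h12.
Qed.

Lemma nat_sq_conv (a b c : nat) :
  `|a%:R - b%:R| ^+ 2 <= c%:R :> algC -> ((a - b) ^ 2 <= c)%N /\ ((b - a) ^ 2 <= c)%N.
Proof.
case: (leqP a b) => h.
  have -> : (a - b = 0)%N by apply/eqP; rewrite subn_eq0.
  rewrite -normrN opprB -natrB // normr_nat -natrX ler_nat.
  by move=> H; split; [rewrite expnS mul0n | exact: H].
have h' : (b <= a)%N by exact: ltnW.
have -> : (b - a = 0)%N by apply/eqP; rewrite subn_eq0.
rewrite -natrB // normr_nat -natrX ler_nat.
by move=> H; split; [exact: H | rewrite expnS mul0n].
Qed.

Set Implicit Arguments. Unset Strict Implicit. Unset Printing Implicit Defensive.

Section Geom.
Variables (F : finFieldType) (d : nat) (A : 'M[F]_d) (chi : F -> algC).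
Hypothesis hchi : nontriv_add_char chi.
Hypothesis hA : nondeg_qform A.
Hypothesis h2 : (2 : F) != 0.

Lemma cardH (v : 'rV[F]_d) : v != 0 ->
  (#|F| * #|[set w : 'rV[F]_d | dotp w v == 0%R]| = #|F| ^ d)%N.
Proof.
move=> hv; apply/eqP; rewrite -(eqr_nat algC) natrM (count_char hchi) exchange_big /=.
under eq_bigr do under eq_bigr do rewrite dotpC -dotpZl.
under eq_bigr do rewrite (orth hchi).
rewrite (bigD1 0) //= scale0r eqxx big1 ?addr0 // => t ht.
by rewrite scaler_eq0 (negbTE ht) (negbTE hv).
Qed.

Variables (j : F) (p0 : 'rV[F]_d).
Hypothesis hp0 : qform A p0 = j.

Definition tw (w : 'rV[F]_d) := - (2 * bil A p0 w) / qform A w.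
Definition phi (w : 'rV[F]_d) := p0 + tw w *: w.
Definition W := [set w : 'rV[F]_d | (qform A w != 0) && (bil A p0 w != 0)].

Lemma phiS w : w \in W -> qform A (phi w) = j.
Proof.
rewrite inE => /andP[hq hb].
rewrite /phi qformD ?hA.1 // hp0 qformZ bilZr /tw.
by field.
Qed.

Lemma cardW : (#|W| <= #|F| * Nk A j)%N.
Proof.
rewrite -sum1_card.
rewrite (partition_big phi (fun u => u \in [set x : 'rV[F]_d | qform A x == j])) /=;
  last by move=> w hw; rewrite inE phiS.
rewrite /Nk -sum1_card big_distrr /= muln1.
apply: leq_sum => u _.
rewrite sum1dep_card.
apply: (leq_trans _ (leq_imset_card (fun l : F => l *: (u - p0)) (mem predT))).
apply: subset_leq_card; apply/subsetP => w; rewrite inE => /andP[hw /eqP hu].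
apply/imsetP; exists (tw w)^-1 => //.
move: hw; rewrite inE => /andP[hq hb].
have ht : tw w != 0.
  by rewrite /tw mulf_neq0 ?invr_eq0 // oppr_eq0 mulf_neq0.
by rewrite -hu /phi (addrC p0) addrK scalerA mulVf // scale1r.
Qed.

Lemma coverW : (#|F| ^ d <= Nk A 0%R + #|[set w : 'rV[F]_d | dotp w (p0 *m A) == 0%R]| + #|W|)%N.
Proof.
have <- : #|[set: 'rV[F]_d]| = (#|F| ^ d)%N by rewrite cardsT card_mx mul1n.
set Z := [set x : 'rV[F]_d | qform A x == 0].
set H := [set w : 'rV[F]_d | dotp w (p0 *m A) == 0%R].
apply: (leq_trans (subset_leq_card (_ : [set: 'rV[F]_d] \subset Z :|: H :|: W))).
  apply/subsetP => w _; rewrite !inE -bil_dotp ?hA.1 //.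
  by case: (qform A w == 0); case: (bil A p0 w == 0).
apply: leq_trans (leq_card_setU _ _).1 _.
by rewrite leq_add2r (leq_card_setU _ _).1.
Qed.
End Geom.

Unset Implicit Arguments.

Lemma nat3 (q M s : nat) : (2 <= M)%N -> (1 <= q)%N ->
  ((q * q * M - q * s) ^ 2 <= (q.-1 * q.-1) * (q * q * M))%N -> (q * M <= 4 * s)%N.
Proof.
move=> hM hq h.
rewrite leqNgt; apply/negP => hlt.
have [e he] : exists e, (q * M = s + e)%N by exists (q * M - s)%N; lia.
have e1 : (q * q * M - q * s = q * e)%N by rewrite -mulnA he mulnDr addKn.
rewrite e1 in h.
have h1 : (e * e <= q.-1 * q.-1 * M)%N.
  rewrite -(@leq_pmul2l (q * q)); last by rewrite muln_gt0 hq.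
  move: h; rewrite expnS expn1; nia.
have h2 : (3 * (q * M) < 4 * e)%N by lia.
have h3 : ((3 * (q * M)) * (3 * (q * M)) < (4 * e) * (4 * e))%N := ltn_mul h2 h2.
have h4 : (q.-1 * q.-1 <= q * q)%N by apply: leq_mul; apply: leq_pred.
have h5 : (q.-1 * q.-1 * M <= q * q * M)%N by rewrite leq_mul2r h4 orbT.
have e2 : ((3 * (q * M)) * (3 * (q * M)) = 9 * ((q * q * M) * M))%N by ring.
have e3 : ((4 * e) * (4 * e) = 16 * (e * e))%N by ring.
have h6 : (2 * (q * q * M) <= (q * q * M) * M)%N by rewrite mulnC leq_mul2l hM orbT.
rewrite e2 e3 in h3.
set Y := (q * q * M)%N in h3 h5 h6.
set Z := (Y * M)%N in h3 h6.
set E := (e * e)%N in h1 h3.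
set R := (q.-1 * q.-1 * M)%N in h1 h5.
lia.
Qed.

Lemma nat2a (q s : nat) : (1 <= q)%N ->
  ((q * q - q * s) ^ 2 <= (q.-1 * q.-1) * (q * q))%N -> (1 <= s)%N.
Proof.
move=> hq h; rewrite lt0n; apply/negP => /eqP s0; move: h; rewrite s0 muln0 subn0.
have h1 : (q.-1 < q)%N by rewrite prednK.
have h2 : (q.-1 * q.-1 < q * q)%N := ltn_mul h1 h1.
have h3 : (0 < q * q)%N by rewrite muln_gt0 hq.
rewrite (_ : (q * q) ^ 2 = q * q * (q * q))%N; last by ring.
by rewrite leqNgt ltn_mul2r h3 h2.
Qed.

Lemma nat2b (q N : nat) : (1 <= q)%N ->
  ((q * N - q * q) ^ 2 <= (q.-1 * q.-1) * (q * q))%N -> (N <= 2 * q - 1)%N.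
Proof.
move=> hq h.
have h1 : (q * N - q * q <= q.-1 * q)%N.
  rewrite leqNgt; apply/negP => hl.
  have := ltn_mul hl hl.
  rewrite (_ : q.-1 * q * (q.-1 * q) = q.-1 * q.-1 * (q * q))%N; last by ring.
  rewrite (_ : (q * N - q * q) ^ 2 = (q * N - q * q) * (q * N - q * q))%N in h; last by ring.
  by rewrite ltnNge h.
have h2 : (q * N <= q * (2 * q - 1))%N.
  have e : (2 * q - 1 = q + q.-1)%N by lia.
  rewrite e mulnDr (mulnC q q.-1).
  set X := (q * N)%N in h1 *. set Y := (q * q)%N in h1 *. set Z := (q.-1 * q)%N in h1 *.
  lia.
by rewrite leq_mul2l in h2; case/orP: h2 => [/eqP|] //; lia.
Qed.

Lemma nat2c (q s N : nat) : (3 <= q)%N -> (N <= 2 * q - 1)%N ->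
  (q * q <= N + q + q * s)%N -> (q <= 4 * s)%N.
Proof.
move=> hq hN h.
rewrite leqNgt; apply/negP => hlt.
have hs : (s <= q - 3)%N by lia.
have h1 : (q * s <= q * (q - 3))%N by rewrite leq_mul2l hs orbT.
have e : (q * (q - 3) + q * 3 = q * q)%N by rewrite -mulnDr subnK.
set X := (q * q)%N in h e. set Y := (q * s)%N in h h1. set Z := (q * (q - 3))%N in h1 e.
lia.
Qed.

Set Implicit Arguments. Unset Strict Implicit. Unset Printing Implicit Defensive.

Section Low.
Variables (F : finFieldType) (d : nat) (A : 'M[F]_d) (chi : F -> algC).
Hypothesis hchi : nontriv_add_char chi.
Hypothesis hA : nondeg_qform A.
Hypothesis h2 : (2 : F) != 0.

Lemma cb_nat k :
  (((#|F| * Nk A k) - #|F| ^ d) ^ 2 <= (#|F|.-1 * #|F|.-1) * #|F| ^ d)%N /\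
  ((#|F| ^ d - (#|F| * Nk A k)) ^ 2 <= (#|F|.-1 * #|F|.-1) * #|F| ^ d)%N.
Proof. by apply: nat_sq_conv; rewrite natrM; exact: (count_bound hchi hA h2). Qed.

Lemma Slow (hd : (2 <= d)%N) (j : F) (hj : j != 0) :
  (#|F| ^ d.-1 <= 4 * Nk A j)%N.
Proof.
have hq := card_ge3 h2.
have hq1 : (1 <= #|F|)%N by apply: leq_trans hq.
case: (ltngtP d 2) => hd2; first by rewrite ltnNge hd in hd2.
  (* d >= 3 *)
  have [_ h] := cb_nat j.
  set M := (#|F| ^ (d - 2))%N.
  have eqd : (#|F| ^ d = #|F| * #|F| * M)%N.
    by rewrite /M -mulnA -!expnS -addn2 subnK //; lia.
  have eqd1 : (#|F| ^ d.-1 = #|F| * M)%N.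
    by rewrite /M -expnS; f_equal; lia.
  have hM : (2 <= M)%N.
    have h1 : (1 <= d - 2)%N by lia.
    apply: leq_trans (leq_pexp2l hq1 h1); rewrite expn1; lia.
  rewrite eqd1; apply: (nat3 _ _ _ hM hq1); rewrite -eqd; exact: h.
(* d = 2 *)
have e2 : (#|F| ^ d = #|F| * #|F|)%N by rewrite hd2 expnS expn1.
have [_ hs] := cb_nat j; rewrite e2 in hs.
have s1 := nat2a _ _ hq1 hs.
have /card_gt0P [p0 hp0] : (0 < Nk A j)%N := s1.
move: hp0; rewrite inE => /eqP hp0.
have [h0 _] := cb_nat 0; rewrite e2 in h0.
have hN0 := nat2b _ _ hq1 h0.
have hp0n : p0 != 0 by apply/eqP => e; move: hp0; rewrite e qform0 => /esym /eqP; rewrite (negbTE hj).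
have hv := hmA hA hp0n.
have /eqP := cardH hchi hv; rewrite e2 eqn_pmul2l // => /eqP hH.
have hW := cardW hA h2 hp0.
have hc := coverW A p0.
rewrite e2 hH in hc.
have -> : d.-1 = 1%N by rewrite hd2.
rewrite expn1; apply: (nat2c _ _ _ hq hN0).
apply: leq_trans hc _; rewrite leq_add2l; exact: hW.
Qed.
End Low.

Unset Implicit Arguments.

Theorem lemma4p1 (d : nat) (hd : (2 <= d)%N) (C : algC) (hC : 0 <= C) :
  exists C' : algC, 0 <= C' /\
  forall (F : finFieldType) (A : 'M[F]_d) (j : F) (chi : F -> algC),
    (2 : F) != 0 ->
    nondeg_qform A ->
    j != 0 ->
    nontriv_add_char chi ->
    (forall x : 'rV[F]_d, x != 0 ->
       (sum_count (Sj A j) x)%:R <= C * (#|F|%:R) ^+ (d - 2)) ->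
    Rstar_2_4_le chi (Sj A j) C'.
Proof.
have h16 : 0 <= 16 * (1 + C) :> algC by rewrite mulr_ge0 ?ler0n ?addr_ge0.
exists (4.-root (16 * (1 + C))); split; first by rewrite rootC_ge0.
move=> F A j chi h2 hA hj hchi hN f.
have hs := Slow hchi hA h2 hd hj.
set s := Nk A j in hs.
have es : #|Sj A j| = s by [].
set q := #|F| in hs hN.
have hq : (0 < q)%N by apply/card_gt0P; exists 0.
have spos : (0 < s)%N.
  by rewrite -(ltn_pmul2l (isT : (0 < 4)%N)) muln0; apply: leq_trans hs; rewrite expn_gt0 hq.
have hK : 0 <= C * q%:R ^+ (d - 2) by rewrite mulr_ge0 ?exprn_ge0 ?ler0n.
have hX := sumG f hK hN.
set X := \sum_m `|extop chi (Sj A j) f m| ^+ 4.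
set Y := (#|Sj A j|%:R^-1 * \sum_(x in Sj A j) `|f x| ^+ 2).
have hX2 : X <= 16 * (1 + C) * Y ^+ 2.
  rewrite /X (sum4 hchi) /Y es.
  apply: le_trans (ler_wpM2l _ hX) _.
    by rewrite mulr_ge0 ?exprn_ge0 ?invr_ge0 ?ler0n.
  rewrite /Sig2; set Sg := \sum_(x in Sj A j) `|f x| ^+ 2.
  have hSg : 0 <= Sg ^+ 2 by rewrite exprn_ge0 // sumr_ge0 // => x _; rewrite exprn_ge0.
  have key : s%:R^-1 ^+ 4 * (#|F| ^ d)%:R * (1 + C * q%:R ^+ (d - 2)) <=
             16 * (1 + C) * s%:R^-1 ^+ 2.
    have sR : s%:R != 0 :> algC by rewrite pnatr_eq0 -lt0n.
    have e : 16 * (1 + C) * s%:R^-1 ^+ 2 = s%:R^-1 ^+ 4 * (16 * (1 + C) * s%:R ^+ 2) :> algC.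
      by field.
    rewrite e -mulrA ler_wpM2l ?exprn_ge0 ?invr_ge0 ?ler0n //.
    have n1 : (q ^ d * q ^ (d - 2) = (q ^ d.-1) ^ 2)%N by rewrite -expnD -expnM; f_equal; lia.
    have n2 : (q ^ d <= (q ^ d.-1) ^ 2)%N by rewrite -expnM leq_pexp2l //; lia.
    have n3 : ((q ^ d.-1) ^ 2 <= 16 * s ^ 2)%N.
      rewrite -!mulnn (_ : (16 * (s * s) = (4 * s) * (4 * s))%N); last by ring.
      exact: leq_mul.
    set Q2 := ((q ^ d.-1) ^ 2)%N in n1 n2 n3.
    rewrite mulrDr mulr1 mulrCA -natrX -natrM n1.
    apply: (@le_trans _ _ (Q2%:R + C * Q2%:R)).
      by rewrite lerD2r ler_nat.
    rewrite -{1}(mul1r Q2%:R) -mulrDl -mulrA (mulrC 16) -natrX -mulrA -natrM ler_wpM2l ?addr_ge0 //.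
    by rewrite ler_nat mulnC.
  rewrite mulrA; apply: le_trans (ler_wpM2r hSg key) _.
  by rewrite le_eqVlt; apply/orP; left; apply/eqP; ring.
rewrite /norm4 /norm2S -/X -/Y.
have hY : 0 <= Y by rewrite mulr_ge0 ?invr_ge0 ?ler0n ?sumr_ge0 // => x _; rewrite exprn_ge0.
have hX0 : 0 <= X by rewrite sumr_ge0 // => m _; rewrite exprn_ge0.
rewrite -(ler_pXn2r (isT : (0 < 4)%N)) ?nnegrE ?mulr_ge0 ?rootC_ge0 ?sqrtC_ge0 //.
rewrite rootCK // exprMn rootCK // (_ : 4 = 2 * 2)%N // exprM sqrtCK //.
Qed.
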